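(* Let $w\ge 2$, $h\ge 3$ and $G=P_w(U)\sqcap C_h$. (1) If $U=\{1\}$ or $U=\{w\}$, then $Z(G)\le\lceil h/2\rceil$. (2) If $U=\{i\}$ with $1<i<w$, then $Z(G)\le h$.
   Context: All graphs are finite, simple and undirected. Zero forcing: given a graph $G$ and a set $S\subseteq V(G)$ of initially filled vertices, the color change rule says that if a filled vertex $v$ has exactly one unfilled neighbor $u$, then $v$ forces $u$ to become filled. $S$ is a zero forcing set if repeatedly applying this rule eventually fills every vertex of $G$. The zero forcing number $Z(G)$ is the minimum cardinality of a zero forcing set of $G$. The path $P_n$ has vertex set $\{1,\dots,n\}$ and edges $\{k,k+1\}$ for $1\le k\le n-1$; the cycle $C_n$ ($n\ge3$) has vertex set $\{1,\dots,n\}$ and edges $\{k,k+1\}$ for $1\le k\le n-1$ together with $\{n,1\}$. Generalized hierarchical product: for graphs $W,H$ and $U\subseteq V(W)$ (the root set), $W(U)\sqcap H$ is the graph with vertex set $V(W)\times V(H)$ in which $(x_1,y_1)$ and $(x_2,y_2)$ are adjacent iff either ($x_1=x_2\in U$ and $y_1y_2\in E(H)$) or ($y_1=y_2$ and $x_1x_2\in E(W)$). *)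

(* Defs.v *)
From mathcomp Require Import all_boot.
Set Implicit Arguments. Unset Strict Implicit. Unset Printing Implicit Defensive.

Definition force_step (T : finType) (e : rel T) (S : {set T}) : {set T} :=
  S :|: [set u | [exists v in S,
           [&& e v u, u \notin S &
               [forall x, (e v x && (x \notin S)) ==> (x == u)]]]].

(* Result of applying the colour change rule until no further change
   (#|T| rounds suffice, since each effective round fills a new vertex). *)
Definition derived_set (T : finType) (e : rel T) (S : {set T}) : {set T} :=
  iter #|T| (force_step e) S.

Definition zero_forcing_set (T : finType) (e : rel T) (S : {set T}) : bool :=
  derived_set e S == [set: T].

(* Zero forcing number: minimum cardinality of a zero forcing set
   ([set: T] is always one, so #|T| is a valid default). *)
Definition Z (T : finType) (e : rel T) : nat :=
  \big[minn/#|T|]_(S : {set T} | zero_forcing_set e S) #|S|.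

(* Path P_w on vertices 1..w, represented by 'I_w (vertex k <-> ordinal k-1). *)
Definition path_rel (w : nat) : rel 'I_w :=
  fun a b => (a.+1 == b :> nat) || (b.+1 == a :> nat).

(* Cycle C_h on vertices 1..h, represented by 'I_h (vertex k <-> ordinal k-1). *)
Definition cycle_rel (h : nat) : rel 'I_h :=
  fun a b => (a.+1 %% h == b) || (b.+1 %% h == a).

Definition hier_rel (T1 T2 : finType) (eW : rel T1) (U : {set T1}) (eH : rel T2)
  : rel (T1 * T2) :=
  fun p q => ((p.1 == q.1) && (p.1 \in U) && eH p.2 q.2)
          || ((p.2 == q.2) && eW p.1 q.1).

(* Root set {i} of P_w, with i given in 1..w. *)
Definition root1 (w i : nat) : {set 'I_w} := [set x : 'I_w | x.+1 == i].

(* Main.v *)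
Require Import Defs.
From mathcomp Require Import all_boot zify.

Lemma Z_le (T : finType) (e : rel T) (S : {set T}) :
  zero_forcing_set e S -> Z e <= #|S|.
Proof.
move=> H; rewrite /Z.
have : S \in index_enum {set T} by rewrite mem_index_enum.
elim: (index_enum _) => [//|a r IH]; rewrite inE big_cons.
case: (eqVneq S a) => [<- _|_ /= /IH IH']; first by rewrite H geq_minl.
case: ifP => // _; exact: leq_trans (geq_minr _ _) IH'.
Qed.

Lemma fs_ext (T : finType) (e : rel T) (X : {set T}) : X \subset force_step e X.
Proof. exact: subsetUl. Qed.

Lemma iter_ext (T : finType) (e : rel T) (S : {set T}) n : S \subset iter n (force_step e) S.
Proof.
elim: n => [|n IH] /=; first exact: subxx.
apply: (subset_trans IH); exact: fs_ext.
Qed.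

Lemma derived_fix (T : finType) (e : rel T) (S : {set T}) :
  force_step e (derived_set e S) = derived_set e S.
Proof.
set f := force_step e.
have key : forall n, f (iter n f S) = iter n f S \/ n < #|iter n.+1 f S|.
  elim=> [|n IH].
    case: (eqVneq (f S) S) => [->|ne]; first by left.
    have hp : S \proper f S by rewrite properEneq eq_sym ne fs_ext.
    by right; exact: leq_ltn_trans (leq0n _) (proper_card hp).
  case: IH => [E|lt].
    by left; rewrite /= E.
  case: (eqVneq (f (iter n.+1 f S)) (iter n.+1 f S)) => [->|ne]; first by left.
  have hp : iter n.+1 f S \proper f (iter n.+1 f S)
    by rewrite properEneq eq_sym ne fs_ext.
  by right; exact: leq_ltn_trans lt (proper_card hp).
rewrite /derived_set; case: (key #|T|) => // lt.
by have := max_card (mem (iter #|T|.+1 f S)); rewrite leqNgt lt.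
Qed.

Definition zclosed (T : finType) (e : rel T) (C : {set T}) :=
  forall v u, v \in C -> e v u -> (forall x, e v x -> x != u -> x \in C) -> u \in C.

Lemma fix_zclosed (T : finType) (e : rel T) (C : {set T}) :
  force_step e C = C -> zclosed T e C.
Proof.
move=> H v u vC evu hx; apply/negPn/negP => uC; apply: (negP uC).
rewrite -H inE; apply/orP; right; rewrite inE; apply/existsP; exists v.
rewrite vC evu uC /=; apply/forallP => x; apply/implyP => /andP [exv xC].
case: (eqVneq x u) => // /(hx x exv); by rewrite (negbTE xC).
Qed.

Lemma zfs_of (T : finType) (e : rel T) (S : {set T}) :
  (forall C : {set T}, S \subset C -> zclosed T e C -> forall p, p \in C) -> zero_forcing_set e S.
Proof.
move=> H; apply/eqP/setP => p; rewrite inE; apply: H.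
  exact: iter_ext.
exact/fix_zclosed/derived_fix.
Qed.

Definition E n k (U : {set 'I_n.+1}) := hier_rel (@path_rel n.+1) U (@cycle_rel k.+1).
Arguments E {n k}.

Lemma nbr n k U (p q : 'I_n.+1 * 'I_k.+1) : E U p q ->
  (q.1 = p.1 /\ p.1 \in U /\ cycle_rel p.2 q.2) \/
  (q.2 = p.2 /\ (q.1.+1 = p.1 \/ p.1.+1 = q.1 :> nat)).
Proof.
rewrite /E /hier_rel => /orP [/andP [/andP [/eqP -> ->] ->]|/andP [/eqP -> ]].
  by left.
by rewrite /path_rel => /orP [/eqP h|/eqP h]; right; split=> //; [right|left].
Qed.

Lemma pairI n k (x : 'I_n.+1 * 'I_k.+1) a y : x.2 = y -> x.1 = a :> nat -> x = (inord a, y).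
Proof.
case: x => [x1 x2] /= -> <-; congr (_, _); apply/val_inj; by rewrite /= inordK.
Qed.

Arguments pairI {n k x a y}.

Lemma up n k (U : {set 'I_n.+1}) (C : {set 'I_n.+1 * 'I_k.+1}) : zclosed _ (E U) C ->
  forall (y : 'I_k.+1) a0 m, m <= n -> (inord a0, y) \in C ->
  (0 < a0 -> (inord a0.-1, y) \in C) ->
  (forall a, a0 <= a < m -> (inord a : 'I_n.+1) \notin U) ->
  forall a, a0 <= a <= m -> (inord a, y) \in C.
Proof.
move=> cl y a0 m mn h0 h1 hU.
suff H : forall d, a0 + d <= m -> (inord (a0+d), y) \in C /\
     (0 < a0+d -> (inord (a0+d).-1, y) \in C).
  move=> a /andP [h2 h3]; have := H (a - a0); rewrite subnKC //; case=> //.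
elim=> [|d IH] hd; first by rewrite addn0.
have hd' : a0 + d <= m by lia.
have [IH1 IH2] := IH hd'.
split; last by rewrite addnS.
apply: (cl (inord (a0+d), y)) => //.
  rewrite /E /hier_rel /=; apply/orP; right; rewrite eqxx /path_rel /= !inordK;
  [by rewrite addnS eqxx | lia | lia].
move=> x /nbr [[_ [hu _]] | [h2 [h3|h3]]] hne.
- by move: hu; rewrite (negbTE (hU (a0+d) _)) //; apply/andP; split; lia.
- rewrite /= inordK in h3; last by lia.
  have -> : x = (inord (a0+d).-1, y) by apply: pairI => //; lia.
  by apply: IH2; lia.
- rewrite /= inordK in h3; last by lia.
  move: hne; have -> : x = (inord (a0+d.+1), y) by apply: pairI => //; lia.
  by rewrite eqxx.
Qed.

Lemma down n k (U : {set 'I_n.+1}) (C : {set 'I_n.+1 * 'I_k.+1}) : zclosed _ (E U) C ->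
  forall (y : 'I_k.+1) a0 m, a0 <= n -> (inord a0, y) \in C ->
  (a0 < n -> (inord a0.+1, y) \in C) ->
  (forall a, m < a <= a0 -> (inord a : 'I_n.+1) \notin U) ->
  forall a, m <= a <= a0 -> (inord a, y) \in C.
Proof.
move=> cl y a0 m mn h0 h1 hU.
suff H : forall d, m + d <= a0 -> (inord (a0-d), y) \in C /\
     (a0 - d < n -> (inord (a0-d).+1, y) \in C).
  move=> a /andP [h2 h3]; have := H (a0 - a).
  have -> : a0 - (a0 - a) = a by lia.
  case=> //; lia.
elim=> [|d IH] hd; first by rewrite subn0.
have hd' : m + d <= a0 by lia.
have [IH1 IH2] := IH hd'.
split.
  apply: (cl (inord (a0-d), y)) => //.
    rewrite /E /hier_rel /=; apply/orP; right; rewrite eqxx /path_rel /= !inordK;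
    [apply/orP; right; apply/eqP; lia | lia | lia].
  move=> x /nbr [[_ [hu _]] | [h2 [h3|h3]]] hne.
  - by move: hu; rewrite (negbTE (hU (a0-d) _)) //; apply/andP; split; lia.
  - rewrite /= inordK in h3; last by lia.
    move: hne; have -> : x = (inord (a0-d.+1), y) by apply: pairI => //; lia.
    by rewrite eqxx.
  - rewrite /= inordK in h3; last by lia.
    have hlt : a0 - d < n.
      move: (ltn_ord x.1); rewrite -h3; lia.
    have -> : x = (inord (a0-d).+1, y) by apply: pairI => //; lia.
    exact: IH2.
have -> : (a0 - d.+1).+1 = a0 - d by lia.
by [].
Qed.

Lemma in_root n i a : a <= n -> ((inord a : 'I_n.+1) \in root1 n.+1 i) = (a.+1 == i).
Proof. by move=> h; rewrite inE inordK. Qed.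

Lemma part2 n k i : 1 < i < n.+1 ->
  Z (hier_rel (@path_rel n.+1) (root1 n.+1 i) (@cycle_rel k.+1)) <= k.+1.
Proof.
move=> hi.
apply: (leq_trans (Z_le _ _ [set (ord0, y) | y : 'I_k.+1] _)).
  2: by rewrite (leq_trans (leq_imset_card _ _)) // card_ord.
apply: zfs_of => C hS cl p.
have cl' : zclosed _ (E (root1 n.+1 i)) C := cl.
have h0 : forall y, (inord 0, y) \in C.
  move=> y; apply: (subsetP hS); apply/imsetP; exists y => //.
  by congr (_, _); apply/val_inj; rewrite /= inordK.
have L1 : forall y a, a <= i.-1 -> (inord a, y) \in C.
  move=> y a ha; apply: (up _ _ _ _ cl' y 0 i.-1) => //; first lia.
  move=> b hb; rewrite in_root; lia.
have L2 : forall y, (inord i, y) \in C.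
  move=> y; apply: (cl' (inord i.-1, y)); first exact: L1.
    rewrite /E /hier_rel /=; apply/orP; right; rewrite eqxx /path_rel /= !inordK;
    [apply/orP; left; apply/eqP; lia | lia | lia].
  move=> x /nbr [[h1 _] | [h2 [h3|h3]]] hne.
  - rewrite /= in h1.
    have -> : x = (inord i.-1, x.2) by apply: pairI => //; rewrite h1 inordK //; lia.
    exact: L1.
  - rewrite /= inordK in h3; last by lia.
    have -> : x = (inord (i.-2), y) by apply: pairI => //; lia.
    apply: L1; lia.
  - rewrite /= inordK in h3; last by lia.
    move: hne; have -> : x = (inord i, y) by apply: pairI => //; lia.
    by rewrite eqxx.
have L3 : forall y a, a <= n -> (inord a, y) \in C.
  move=> y a ha; case: (leqP a i.-1) => hai; first exact: L1.
  apply: (up _ _ _ _ cl' y i n) => //; try lia.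
  - by move=> _; apply: L1.
  - move=> b hb; rewrite in_root; lia.
have -> : p = (inord p.1, p.2) by apply: pairI.
apply: L3; by have := ltn_ord p.1.
Qed.

Lemma cyc k a b : a <= k -> b <= k ->
  cycle_rel (inord a : 'I_k.+1) (inord b : 'I_k.+1) =
  ((if a == k then 0 else a.+1) == b) || ((if b == k then 0 else b.+1) == a).
Proof.
move=> ha hb.
have m : forall x, x <= k -> x.+1 %% k.+1 = if x == k then 0 else x.+1.
  move=> x hx; case: eqP => [->|ne]; [exact: modnn | apply: modn_small; lia].
by rewrite /cycle_rel !inordK // !m.
Qed.

Lemma F2 n k i r (C : {set 'I_n.+1 * 'I_k.+1}) :
  zclosed _ (E (root1 n.+1 i)) C -> r <= n -> r.+1 = i ->
  forall y1 y2 y3, y1 <= k -> y2 <= k -> y3 <= k ->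
  (forall a, a <= n -> (inord a, inord y2) \in C) ->
  cycle_rel (inord y2 : 'I_k.+1) (inord y3) ->
  (forall c, c <= k -> cycle_rel (inord y2 : 'I_k.+1) (inord c) -> c <> y3 -> c = y1) ->
  (inord r, inord y1) \in C -> (inord r, inord y3) \in C.
Proof.
move=> cl hr ri y1 y2 y3 h1 h2 h3 full c23 uniq c1.
apply: (cl (inord r, inord y2)); first exact: full.
  rewrite /E /hier_rel /=; apply/orP; left; rewrite eqxx in_root // ri eqxx /=.
  exact: c23.
move=> x /nbr [[h4 [_ h5]] | [h4 _]] hne.
- have hx2 : x.2 = inord x.2 by apply/val_inj; rewrite /= inordK.
  have hlt := ltn_ord x.2.
  rewrite /= in h4 h5; rewrite hx2 in h5.
  have e1 : x.2 = y1 :> nat.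
    apply: (uniq x.2) => //.
    move=> e; move: hne; have -> : x = ((inord r : 'I_n.+1), (inord y3 : 'I_k.+1)).
      apply: pairI; first (apply/val_inj; rewrite /= inordK //).
      by rewrite h4 inordK //; lia.
    by rewrite eqxx.
  have -> : x = ((inord r : 'I_n.+1), (inord y1 : 'I_k.+1)).
    apply: pairI; first (apply/val_inj; rewrite /= inordK //).
    by rewrite h4 inordK //; lia.
  exact: c1.
- have -> : x = (inord x.1, inord y2) by apply: pairI.
  apply: full; by have := ltn_ord x.1.
Qed.

Lemma rootforce n k i r r' (C : {set 'I_n.+1 * 'I_k.+1}) :
  zclosed _ (E (root1 n.+1 i)) C -> r <= n -> r' <= n -> r.+1 = i ->
  (r'.+1 = r \/ r.+1 = r') ->
  (forall b, b <= n -> (b.+1 = r \/ r.+1 = b) -> b = r') ->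
  (forall c, (inord r, c) \in C) -> forall y, (inord r', y) \in C.
Proof.
move=> cl hr hr' ri e1 uniq allc y.
apply: (cl (inord r, y)); first exact: allc.
  rewrite /E /hier_rel /=; apply/orP; right; rewrite eqxx /path_rel /= !inordK //.
  by case: e1 => ->; rewrite eqxx ?orbT.
move=> x /nbr [[h4 _] | [h4 h5]] hne.
- rewrite /= in h4; have -> : x = (inord r, x.2) by apply: pairI => //; rewrite h4 inordK //; lia.
  exact: allc.
- rewrite /= inordK in h5 => //.
  have e : x.1 = r' :> nat.
    apply: uniq => //; by have := ltn_ord x.1; lia.
  move: hne; have -> : x = (inord r', y) by apply: pairI.
  by rewrite eqxx.
Qed.

Ltac uniqtac := let c := fresh "c" in let hc := fresh "hc" in
  move=> c hc; rewrite cyc //; try lia;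
  case: ifP => /eqP ?; case: ifP => /eqP ?; move=> /orP [] /eqP ? ?; lia.

Lemma part1_gen n k i r L (C : {set 'I_n.+1 * 'I_k.+1}) : 2 <= k ->
  zclosed _ (E (root1 n.+1 i)) C -> r <= n -> r.+1 = i ->
  (forall y, (inord L, y) \in C -> forall a, a <= n -> (inord a, y) \in C) ->
  ((forall c, (inord r, c) \in C) -> forall y a, a <= n -> (inord a, y) \in C) ->
  (forall y, y <= k -> (y == 0) || (odd y && (y < k)) -> (inord L, inord y) \in C) ->
  forall p, p \in C.
Proof.
move=> hk cl hr ri HL HR hS.
have Full : forall y, y <= k -> (y == 0) || (odd y && (y < k)) ->
    forall a, a <= n -> (inord a, inord y) \in C.
  move=> y hy hy'; apply: HL; exact: hS.
have Cyc : forall y, y <= k -> (inord r, inord y) \in C.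
  elim/ltn_ind => y IH hy.
  case: (posnP y) => [->|hpos]; first by apply: Full.
  case ho: (odd y).
    case: (ltnP y k) => hyk.
      by apply: Full => //; rewrite ho hyk orbT.
    have -> : y = k by lia.
    apply: (F2 _ _ _ _ _ cl hr ri 1 0 k); try lia.
    - by apply: Full.
    - by rewrite cyc // eqxx orbT.
    - uniqtac.
    - by apply: Full => //; lia.
  have hy2 : 2 <= y.
    case: y hpos ho {IH hy} => [|[|y]] //.
  have oy : odd y.-1.
    by move: ho; rewrite -{1}(prednK hpos) /= => /negbFE.
  apply: (F2 _ _ _ _ _ cl hr ri y.-2 y.-1 y); try lia.
  - by apply: Full; [lia | rewrite oy /=; apply/orP; right; lia].
  - rewrite cyc; try lia.
    rewrite (_ : (y.-1 == k) = false); last by apply/eqP; lia.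
    by rewrite prednK // eqxx.
  - uniqtac.
  - apply: IH; lia.
move=> p; have -> : p = (inord p.1, p.2) by apply: pairI.
apply: HR; last by have := ltn_ord p.1.
move=> c; have -> : c = inord c by apply/val_inj; rewrite /= inordK.
by apply: Cyc; have := ltn_ord c.
Qed.

Lemma part1 n k i : 1 <= n -> 2 <= k -> (i == 1) || (i == n.+1) ->
  Z (hier_rel (@path_rel n.+1) (root1 n.+1 i) (@cycle_rel k.+1)) <= (k.+1).+1./2.
Proof.
move=> hn hk hi.
pose L := if i == 1 then n else 0.
pose S := [set ((inord L : 'I_n.+1),
     (inord (if val j == 0 then 0 else (2 * j).-1) : 'I_k.+1)) | j : 'I_(k./2).+1].
apply: (leq_trans (Z_le _ _ S _)).
2: by rewrite (leq_trans (leq_imset_card _ _)) // card_ord.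
apply: zfs_of => C hS cl.
have cl' : zclosed _ (E (root1 n.+1 i)) C := cl.
have hS' : forall y, y <= k -> (y == 0) || (odd y && (y < k)) -> (inord L, inord y) \in C.
  move=> y hy /orP [/eqP -> | /andP [oy yk]].
    by apply: (subsetP hS); apply/imsetP; exists ord0.
  have ey := odd_double_half y; rewrite oy -muln2 in ey.
  have ek := odd_double_half k; rewrite -muln2 in ek.
  have ok : odd k <= 1 by case: (odd k).
  apply: (subsetP hS); apply/imsetP; exists (inord (y./2).+1) => //.
  congr (_, _); congr inord.
  rewrite (_ : val _ = (y./2).+1); last by rewrite /= inordK; lia.
  rewrite inordK /=; lia.
case/orP: hi => /eqP ei; subst i.
- rewrite /L /= in hS'.
  apply: (part1_gen _ _ _ 0 n _ hk cl') => //.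
  + move=> y hy a ha.
    apply: (down _ _ _ _ cl' y n 0) => //; try lia.
    move=> b hb; rewrite in_root; lia.
  + move=> allc y a ha.
    have h1 : (inord 1, y) \in C.
      apply: (rootforce _ _ _ 0 1 C cl') => //; lia.
    case: (posnP a) => [->|ha0]; first exact: allc.
    apply: (up _ _ _ _ cl' y 1 n) => //; try lia.
    move=> b hb; rewrite in_root; lia.
  rewrite (_ : L = 0) in hS'; last by rewrite /L; case: eqP => //; lia.
  apply: (part1_gen _ _ _ n 0 _ hk cl') => //.
  + move=> y hy a ha.
    apply: (up _ _ _ _ cl' y 0 n) => //; try lia.
    move=> b hb; rewrite in_root; lia.
  + move=> allc y a ha.
    have h1 : (inord n.-1, y) \in C.
      apply: (rootforce _ _ _ n n.-1 C cl') => //; lia.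
    case: (ltnP a n) => han; last by have -> : a = n by lia.
    apply: (down _ _ _ _ cl' y n.-1 0) => //; try lia.
    * by rewrite prednK.
    * move=> b hb; rewrite in_root; lia.
Qed.

Theorem mainTheorem8 (w h : nat) : 2 <= w -> 3 <= h ->
  (forall i : nat, (i == 1) || (i == w) ->
     Z (hier_rel (@path_rel w) (root1 w i) (@cycle_rel h)) <= h.+1./2) /\
  (forall i : nat, 1 < i < w ->
     Z (hier_rel (@path_rel w) (root1 w i) (@cycle_rel h)) <= h).
Proof.
case: w => [|[|n]] // hw; case: h => [|[|[|k]]] // hh.
split.
- move=> i hi; exact: (part1 (n.+1) (k.+2) i).
- move=> i hi; exact: (part2 (n.+1) (k.+2) i).
Qed.
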